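(* Let $\mathcal{H}=(X,Y,E)$ be a bipartite graph with $Y=\{y_1,\dots,y_\ell\}$, let $R$ be a relation on attributes $X$, and let $\mathcal{E}_{\mathcal{H}}(R)=\{L(v) : v \text{ a node of } T_{\mathcal{H}}(R),\ L(v)\neq\bot^*\}$. Then $\mathcal{E}_{\mathcal{H}}(R)$ is $\mathcal{H}$-equivalent to $R$ and $|\mathcal{E}_{\mathcal{H}}(R)|\le e\cdot\phi(\mathcal{H})$, where $\phi(\mathcal{H})=\ell!\prod_{j\in[\ell]} d_{\mathcal{H}}(y_j)$.
   Context: $d_{\mathcal{H}}(v)$ is the degree of $v$ in $\mathcal{H}$; $t[z]$ is the value of tuple $t$ at attribute $z$; $e$ is Euler's number. A tuple $t$ over $Y$ is $\mathcal{H}$-accepted by a relation $R$ on $X$ if some $t_R\in R$ satisfies $t_R[x_i]\neq t[y_j]$ for all $(x_i,y_j)\in E$; relations $R_1,R_2$ on $X$ are $\mathcal{H}$-equivalent if they $\mathcal{H}$-accept exactly the same tuples over $Y$. Construction of $T_{\mathcal{H}}(R)$: a rooted tree whose nodes have labels $L(v)$ that are either tuples of $R$ or the symbol $\bot^*$, and whose edges have labels $(y_j,a)$. Initially it is a single root labeled $\bot^*$. The tuples of $R$ are scanned one by one in an arbitrary order; when $t$ is scanned, every leaf $v$ with $L(v)=\bot^*$, whose root-to-$v$ path has edge labels $(y_{j_1},a_{j_1}),\dots,(y_{j_p},a_{j_p})$, is processed: if there exist $j\in\{j_1,\dots,j_p\}$ and $(x_i,y_j)\in E$ with $t[x_i]=a_j$,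 nothing is done; otherwise set $L(v)=t$, and if $p<\ell$, for every edge $(x_i,y_j)\in E$ with $j\notin\{j_1,\dots,j_p\}$ add a new child of $v$ labeled $\bot^*$ via an edge labeled $(y_j,t[x_i])$. The construction stops when all tuples are scanned or no leaf has label $\bot^*$. *)

(* Defs.v *)
From mathcomp Require Import all_boot.
Set Implicit Arguments. Unset Strict Implicit. Unset Printing Implicit Defensive.

Section Defs.
Variables (X : finType) (l : nat) (D : eqType).
(* Bipartite graph H = (X, Y, E) with Y = {y_0,...,y_(l-1)} encoded as 'I_l;
   an edge (x_i, y_j) is the pair (x_i, j) \in E. *)
Variable E : {set X * 'I_l}.

Definition degY (j : 'I_l) : nat := #|[set x : X | (x, j) \in E]|.

Definition phiH : nat := l`! * \prod_(j < l) degY j.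

(* tuples over X are {ffun X -> D}; tuples over Y are functions 'I_l -> D *)
Definition Haccepted (R : seq {ffun X -> D}) (t : 'I_l -> D) : Prop :=
  exists2 tR, tR \in R & forall x j, (x, j) \in E -> tR x != t j.

Definition Hequiv (R1 R2 : seq {ffun X -> D}) : Prop :=
  forall t : 'I_l -> D, Haccepted R1 t <-> Haccepted R2 t.

(* A node is represented by its root-to-node path: the
   sequence of edges (x_i, y_j) used to create its ancestors (with the value
   a = t[x_i] giving the edge label (y_j, a)), together with its label:
   None = bot*, Some t = the tuple t. *)
Definition pathT := seq (X * 'I_l * D).
Definition nodeT := (pathT * option {ffun X -> D})%type.

Definition path_ys (p : pathT) : seq 'I_l := [seq e.1.2 | e <- p].

Definition blocked (t : {ffun X -> D}) (p : pathT) : bool :=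
  has (fun e => [exists x : X, ((x, e.1.2) \in E) && (t x == e.2)]) p.

Definition children (t : {ffun X -> D}) (p : pathT) : seq nodeT :=
  if size p < l then
    [seq (rcons p (xe.1, xe.2, t xe.1), None)
       | xe <- enum E & xe.2 \notin path_ys p]
  else [::].

Definition process (t : {ffun X -> D}) (n : nodeT) : seq nodeT :=
  match n.2 with
  | Some _ => [:: n]
  | None => if blocked t n.1 then [:: n] else (n.1, Some t) :: children t n.1
  end.

Definition step (ns : seq nodeT) (t : {ffun X -> D}) : seq nodeT :=
  flatten [seq process t n | n <- ns].

(* The tree built by scanning the tuples of R in the order given by s.
   (Stopping early when no bot*-leaf is left changes nothing, since then
   further steps are the identity.) *)
Definition TH (s : seq {ffun X -> D}) : seq nodeT :=
  foldl step [:: ([::], None)] s.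

Definition EH (s : seq {ffun X -> D}) : seq {ffun X -> D} :=
  undup (pmap snd (TH s)).
End Defs.

(* Main.v *)
Require Import Defs.
From mathcomp Require Import all_boot.
From Stdlib Require Import Reals Lra.
From mathcomp Require Import zify.

Lemma sum_head (T : finType) (a : seq T) :
  (\sum_(e : T) (ohead a == Some e) = (a != [::]))%N.
Proof.
case: a => [|x a] /=; first by rewrite big1.
rewrite (bigD1 x) //= eqxx big1 //.
move=> i ne; rewrite (_ : (Some x == Some i) = false) //; apply/eqP => [[E]]; by rewrite E eqxx in ne.
Qed.

Lemma split_size (T : finType) (L : seq (seq T)) :
  size L = (count (pred1 [::]) L + \sum_(e : T) count (fun p => ohead p == Some e) L)%N.
Proof.
elim: L => [|a L IH]; first by rewrite big1.
rewrite /= big_split /= sum_head. 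
have -> : (\sum_(e:T) count (fun p => ohead p == Some e) L = size L - count (pred1 [::]) L)%N by lia.
have := count_size (pred1 [::]) L.
case: a => /= [|x a]; lia.
Qed.

Fixpoint Hf (m : nat) : nat := if m is m'.+1 then (1 + m'.+1 * Hf m')%nat else 1%nat.

Section Count.
Variables (X : finType) (l : nat) (E : {set X * 'I_l}).

Definition valid (U : seq 'I_l) (p : seq (X * 'I_l)) :=
  all (fun e => (e \in E) && (e.2 \in U)) p && uniq (map snd p).
Definition PU (U : seq 'I_l) := (\prod_(j <- U) degY E j)%nat.

Lemma count_e (U : seq 'I_l) (L : seq (seq (X * 'I_l))) e :
  uniq U -> uniq L -> all (valid U) L ->
  let Le := map behead (filter (fun p => ohead p == Some e) L) in
  count (fun p => ohead p == Some e) L = (((e \in E) && (e.2 \in U)) * size Le)%nat /\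
  uniq Le /\ all (valid (rem e.2 U)) Le.
Proof.
move=> uU uL /allP vL Le.
have sz : size Le = count (fun p => ohead p == Some e) L by rewrite size_map size_filter.
have hd : forall p, p \in filter (fun p => ohead p == Some e) L -> p = e :: behead p.
  by move=> [|a p]; rewrite mem_filter //= => /andP[/eqP[->] _].
split.
  case g: ((e \in E) && (e.2 \in U)); first by rewrite mul1n sz.
  rewrite mul0n; apply/eqP; rewrite -leqn0 leqNgt -has_count; apply/hasP => [[p pL hp]].
  have /andP[/allP a _] := vL p pL.
  have := hd p; rewrite mem_filter hp pL => /(_ isT) ep.
  by move: (a e); rewrite ep inE eqxx g => /(_ isT).
split.
  rewrite map_inj_in_uniq ?filter_uniq // => p q pf qf eq.
  by rewrite (hd p pf) (hd q qf) eq.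
apply/allP => p' /mapP [p pf ->].
have ep := hd p pf.
move: pf; rewrite mem_filter => /andP[_ pL].
move: (vL p pL); rewrite ep /valid /= => /andP[/andP[/andP[eE eU] a] /andP[ne u]].
rewrite u andbT; apply/allP => f fp.
move/allP: a => /(_ f fp) /andP [-> fU].
rewrite (mem_rem_uniq _ uU) inE fU andbT.
apply: contra ne => /eqP <-; exact: map_f.
Qed.

Lemma sum_pair_E (U : seq 'I_l) (c : 'I_l -> nat) (K : nat) : uniq U ->
  (forall j, j \in U -> degY E j * c j = K) ->
  (\sum_(e : X * 'I_l) ((e \in E) && (e.2 \in U)) * c e.2 = size U * K)%nat.
Proof.
move=> uU hc.
rewrite (eq_bigr (fun p : X * 'I_l => (fun x j => (((x, j) \in E) && (j \in U)) * c j)%nat p.1 p.2)); last by case.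
transitivity (\sum_(x : X) \sum_(j : 'I_l) (((x, j) \in E) && (j \in U)) * c j)%nat; first by rewrite pair_bigA.
rewrite exchange_big /=.
transitivity (\sum_(j : 'I_l) (j \in U) * K)%nat.
  apply: eq_bigr => j _.
  case jU: (j \in U); last by rewrite big1 // => x _; rewrite andbF.
  rewrite mul1n -(hc j) // /degY -sum1_card big_distrl /= [RHS]big_mkcond /=.
  apply: eq_bigr => x _; rewrite inE andbT; by case: ((x, j) \in E).
rewrite -big_distrl /=; congr (_ * _)%nat.
rewrite -(card_uniqP uU) -sum1_card [RHS]big_mkcond /=.
by apply: eq_bigr => j _; case: (j \in U).
Qed.

Lemma count_bound m : forall U L, uniq U -> size U = m ->
  (forall j, 0 < degY E j) -> uniq L -> all (valid U) L ->
  (size L <= Hf m * PU U)%nat.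
Proof.
have PU_gt0 U : (forall j, 0 < degY E j) -> (0 < PU U)%nat by move=> h; apply: prodn_gt0.
elim: m => [|m IH] U L uU sU hdeg uL vL.
  rewrite split_size /= mul1n.
  case: U uU sU vL => // _ _ vL.
  rewrite big1 ?addn0; last first.
    move=> e _; have [-> _] := @count_e [::] L e isT uL vL; by rewrite andbF.
  rewrite (count_uniq_mem [::] uL) /PU big_nil; by case: ([::] \in L).
rewrite split_size.
have c1 : (count (pred1 [::]) L <= 1)%nat.
  by rewrite (count_uniq_mem [::] uL); case: ([::] \in L).
have ce : forall e : X * 'I_l, (count (fun p => ohead p == Some e) L <=
     ((e \in E) && (e.2 \in U)) * (Hf m * PU (rem e.2 U)))%nat.
  move=> e; have [-> [u v]] := @count_e U L e uU uL vL.
  case g: ((e \in E) && (e.2 \in U)) => //=; rewrite !mul1n.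
  move/andP: g => [_ eU].
  apply: IH => //; first exact: rem_uniq.
  by rewrite size_rem // sU.
apply: leq_trans; first (apply: (leq_add c1); apply: leq_sum => e _; exact: ce).
rewrite (@sum_pair_E U (fun j => Hf m * PU (rem j U)) (Hf m * PU U))%nat //; last first.
  move=> j jU; rewrite /PU (big_rem j jU) /=; lia.
rewrite sU /=.
have := PU_gt0 U hdeg; nia.
Qed.
End Count.
Set Implicit Arguments. Unset Strict Implicit.

Section Tree.
Variables (X : finType) (l : nat) (D : eqType) (E : {set X * 'I_l}).

Definition proj (n : nodeT X l D) : seq (X * 'I_l) := map fst n.1.

Lemma path_ysE (p : pathT X l D) : path_ys p = map snd (map fst p).
Proof. by rewrite /path_ys -map_comp. Qed.

Lemma process_spec t (n n' : nodeT X l D) : n' \in process E t n ->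
  [\/ n' = n /\ (n.2 = None -> blocked E t n.1),
      [/\ n' = (n.1, Some t), n.2 = None & ~~ blocked E t n.1] |
      exists xe, [/\ n' = (rcons n.1 (xe.1, xe.2, t xe.1), None), n.2 = None,
         ~~ blocked E t n.1, xe \in E & xe.2 \notin path_ys n.1]].
Proof.
rewrite /process; case: n => p [lab|] /=.
  by rewrite inE => /eqP ->; constructor 1.
case b: (blocked E t p).
  by rewrite inE => /eqP ->; constructor 1.
rewrite inE => /orP [/eqP ->|]; first by constructor 2.
rewrite /children; case: ifP => // _ /mapP [xe].
rewrite mem_filter mem_enum => /andP [nin xE] ->.
by constructor 3; exists xe.
Qed.

Lemma proc_proj t (n : nodeT X l D) : exists ch, map proj (process E t n) = proj n :: ch /\ uniq ch /\
  (forall q, q \in ch -> n.2 = None /\ exists xe, q = rcons (proj n) xe).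
Proof.
rewrite /process; case: n => p [lab|] /=; first by exists [::].
case: (blocked E t p); first by exists [::].
rewrite /children; case: ifP => _ /=; last by exists [::].
eexists; split; first reflexivity.
rewrite -map_comp; split.
  rewrite map_inj_in_uniq; first exact: (filter_uniq _ (enum_uniq _)).
  move=> [xa ja] [xb jb] _ _; rewrite /proj /= !map_rcons /=; by move/rcons_inj => [-> ->].
move=> q /mapP [[x j] _ ->]; split => //; exists (x, j); by rewrite /proj /= map_rcons.
Qed.


Lemma uniq_map_eq (T U : eqType) (f : T -> U) s x y :
  uniq (map f s) -> x \in s -> y \in s -> f x = f y -> x = y.
Proof.
elim: s => //= a s IH /andP [na u]; rewrite !inE => /orP [/eqP ->|xs] /orP [/eqP ->|ys] //.
- by move=> e; move: na; rewrite e map_f.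
- by move=> e; move: na; rewrite -e map_f.
- exact: IH.
Qed.

Lemma rcons_cat_split (T : eqType) (a b s : seq T) x : rcons a x = b ++ s ->
  s = [::] \/ exists s', s = rcons s' x /\ a = b ++ s'.
Proof.
case/lastP: s => [|s' y]; first by left.
rewrite -rcons_cat => /rcons_inj [-> ->]; right; by exists s'.
Qed.

Definition I3 (ns : seq (nodeT X l D)) := forall n m, n \in ns -> m \in ns ->
  n.2 = None -> forall s, proj m = proj n ++ s -> s = [::].

Lemma mem_stepP (t : {ffun X -> D}) (ns : seq (nodeT X l D)) (n' : nodeT X l D) : reflect (exists2 n, n \in ns & n' \in process E t n) (n' \in step E ns t).
Proof. exact: flatten_mapP. Qed.

Lemma proj_child (p : pathT X l D) xe a : proj (rcons p (xe.1, xe.2, a), None) = rcons (map fst p) xe.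
Proof. by rewrite /proj /= map_rcons; case: xe. Qed.

Lemma I3_step t ns : uniq (map proj ns) -> I3 ns -> I3 (step E ns t).
Proof.
move=> u h3 n' m' /mem_stepP [n nin pn] /mem_stepP [m min pm] n'N s.
have [[en bl]|[en _ _]|[xe [en nN nb xE xn]]] := process_spec pn; subst n'.
- have nN : n.2 = None by [].
  have nb := bl nN.
  have [[-> _]|[-> _ _]|[xe' [-> mN mb _ _]]] := process_spec pm.
  + exact: h3.
  + exact: (h3 n m).
  + rewrite proj_child => /rcons_cat_split [//|[s' [_ e]]].
    have s'0 := h3 n m nin min nN s' e.
    move: e; rewrite s'0 cats0 => e.
    have nm := uniq_map_eq u nin min (esym e).
    by move: nb; rewrite nm (negPf mb).
- by [].
- rewrite proj_child.
  have [[-> _]|[-> _ _]|[xe' [-> mN mb _ _]]] := process_spec pm.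
  + by rewrite cat_rcons => e; have := h3 n m nin min nN _ e.
  + by rewrite cat_rcons => e; have := h3 n m nin min nN _ e.
  + rewrite proj_child => /rcons_cat_split [//|[s' [_ e]]].
    by move: e; rewrite cat_rcons => e; have := h3 n m nin min nN _ e.
Qed.


Lemma I2_step t ns : all (fun n => @valid X l E (enum 'I_l) (proj n)) ns ->
  all (fun n => @valid X l E (enum 'I_l) (proj n)) (step E ns t).
Proof.
move=> /allP h; apply/allP => n' /mem_stepP [n nin pn]; have vn := h n nin.
have [[-> _]|[-> _ _]|[xe [-> nN nb xE xn]]] := process_spec pn => //.
move: vn; rewrite proj_child /valid all_rcons map_rcons rcons_uniq xE mem_enum /=.
by move=> /andP [-> ->]; rewrite -path_ysE xn.
Qed.

Lemma I3_sub (ns1 ns2 : seq (nodeT X l D)) : {subset ns1 <= ns2} -> I3 ns2 -> I3 ns1.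
Proof. move=> sub h n m nin min; exact: h (sub n nin) (sub m min). Qed.

Lemma I1_step t ns : uniq (map proj ns) -> I3 ns -> uniq (map proj (step E ns t)).
Proof.
elim: ns => [|n ns IH] //= /andP [nn u] h3.
have h3' : I3 ns by apply: I3_sub h3 => x xin; rewrite inE xin orbT.
rewrite /step /= map_cat cat_uniq -/(step E ns t) IH // andbT.
have [ch [-> [uch hch]]] := proc_proj t n.
have nNn : forall m, m \in ns -> proj m != proj n.
  by move=> m min; apply: contra nn => /eqP <-; exact: map_f.
rewrite /= uch andbT; apply/andP; split.
  apply/negP => /hch [_ [xe /(congr1 size)]]; rewrite size_rcons; lia.
apply/hasPn => q /mapP [m' /mem_stepP [m min pm] ->].
have nin : n \in n :: ns by rewrite inE eqxx.
have min' : m \in n :: ns by rewrite inE min orbT.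
have [[-> _]|[-> _ _]|[xe' [-> mN mb _ _]]] := process_spec pm.
- rewrite inE negb_or nNn //=; apply/negP => /hch [nN [xe e]].
  by have := h3 n m nin min' nN [:: xe]; rewrite cats1 => /(_ e).
- change (proj (m.1, Some t)) with (proj m); rewrite inE negb_or nNn //=; apply/negP => /hch [nN [xe e]].
  by have := h3 n m nin min' nN [:: xe]; rewrite cats1 => /(_ e).
- rewrite proj_child inE negb_or; apply/andP; split.
    apply/eqP => e; by have := h3 m n min' nin mN [:: xe']; rewrite cats1 => /(_ (esym e)).
  apply/negP => /hch [nN [xe /rcons_inj [e _]]].
  by move: (nNn m min); rewrite {1}/proj e eqxx.
Qed.


Definition Inv (ns : seq (nodeT X l D)) :=
  [/\ uniq (map proj ns), all (fun n => @valid X l E (enum 'I_l) (proj n)) ns & I3 ns].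

Lemma Inv_step t ns : Inv ns -> Inv (step E ns t).
Proof.
case=> u v h; split; [exact: I1_step | exact: I2_step | exact: I3_step].
Qed.

Lemma Inv_fold s ns : Inv ns -> Inv (foldl (step E) ns s).
Proof. elim: s ns => //= t s IH ns h; apply: IH; exact: Inv_step. Qed.

Lemma Inv_init : Inv [:: ([::], None)].
Proof.
split => //. move=> n m; rewrite !inE => /eqP -> /eqP -> _ s /=.
by case: s.
Qed.

Lemma lab_step (P : pred {ffun X -> D}) t ns :
  (forall n tr, n \in ns -> n.2 = Some tr -> P tr) -> P t ->
  (forall n tr, n \in step E ns t -> n.2 = Some tr -> P tr).
Proof.
move=> h Pt n' tr /mem_stepP [n nin pn].
have [[-> _]|[-> _ _]|[xe [-> nN nb xE xn]]] := process_spec pn => //.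
- exact: h.
- by move=> [<-].
Qed.

Lemma lab_fold (P : pred {ffun X -> D}) s ns :
  (forall n tr, n \in ns -> n.2 = Some tr -> P tr) -> all P s ->
  (forall n tr, n \in foldl (step E) ns s -> n.2 = Some tr -> P tr).
Proof.
elim: s ns => //= t s IH ns h /andP [Pt As]; apply: IH => //; exact: lab_step.
Qed.

Variable t0 : 'I_l -> D.
Definition acc (tr : {ffun X -> D}) := [forall x, [forall j, ((x, j) \in E) ==> (tr x != t0 j)]].
Definition cons_ (p : pathT X l D) := all (fun e : X * 'I_l * D => e.2 == t0 e.1.2) p.
Definition Good (ns : seq (nodeT X l D)) := exists2 n, n \in ns & exists2 tr, n.2 = Some tr & acc tr.
Definition Pend (ns : seq (nodeT X l D)) := exists2 n, n \in ns & n.2 = None /\ cons_ n.1.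

Lemma good_step t ns : Good ns -> Good (step E ns t).
Proof.
move=> [n nin [tr ntr atr]]; exists n => //; last by exists tr.
apply/mem_stepP; exists n => //; by rewrite /process ntr inE.
Qed.

Lemma good_fold s ns : Good ns -> Good (foldl (step E) ns s).
Proof. elim: s ns => //= t s IH ns h; apply: IH; exact: good_step. Qed.

Lemma pend_acc t ns : Pend ns -> acc t -> Good (step E ns t).
Proof.
move=> [n nin [nN cn]] ha.
have nb : ~~ blocked E t n.1.
  apply/hasPn => e ein; apply/existsP => [[x /andP [xE /eqP tx]]].
  move/allP: cn => /(_ e ein) /eqP ce.
  by move: ha => /forallP /(_ x) /forallP /(_ e.1.2); rewrite xE tx ce eqxx.
exists (n.1, Some t); last by exists t.
apply/mem_stepP; exists n => //; by rewrite /process nN (negPf nb) inE eqxx.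
Qed.

Lemma pend_step t ns : Inv ns -> Pend ns -> Good (step E ns t) \/ Pend (step E ns t).
Proof.
move=> [_ /allP v _] pd; case ha: (acc t); first by left; exact: pend_acc.
move: pd => [n nin [nN cn]].
case nb: (blocked E t n.1).
  right; exists n => //; apply/mem_stepP; exists n => //; by rewrite /process nN nb inE eqxx.
right.
move/negbT: ha => /forallPn [x /forallPn [j]]; rewrite negb_imply negbK => /andP [xjE /eqP txj].
have jn : j \notin path_ys n.1.
  apply/negP => /mapP [e ein ej].
  move/negP: nb; apply; apply/hasP; exists e => //; apply/existsP; exists x.
  move/allP: cn => /(_ e ein) /eqP ->; by rewrite -ej xjE txj eqxx.
have sz : size n.1 < l.
  have := v n nin; rewrite /valid => /andP [_ u].
  have: uniq (j :: path_ys n.1) by rewrite /= jn path_ysE u.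
  move/uniq_leq_size => /(_ (enum 'I_l)).
  rewrite size_enum_ord /= /path_ys size_map; apply => y _; exact: mem_enum.
exists (rcons n.1 ((x, j).1, (x, j).2, t (x, j).1), None); last first.
  by split => //; rewrite /cons_ all_rcons /= txj eqxx.
apply/mem_stepP; exists n => //; rewrite /process nN nb inE /children sz.
apply/orP; right; apply: map_f; by rewrite mem_filter mem_enum xjE jn.
Qed.

Lemma fold_GP s ns : Inv ns -> Good ns \/ Pend ns ->
  Good (foldl (step E) ns s) \/ Pend (foldl (step E) ns s).
Proof.
elim: s ns => //= t s IH ns hi [g|p]; apply: IH; try exact: Inv_step.
- left; exact: good_step.
- exact: pend_step.
Qed.

End Tree.

Lemma accP (X : finType) (l : nat) (D : eqType) (E : {set X * 'I_l}) t0 (tr : {ffun X -> D}) :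
  reflect (forall x j, (x, j) \in E -> tr x != t0 j) (acc E t0 tr).
Proof.
apply: (iffP forallP) => h.
  by move=> x j xj; move/forallP: (h x) => /(_ j); rewrite xj.
by move=> x; apply/forallP => j; apply/implyP; exact: h.
Qed.

Lemma PU_enum (X : finType) (l : nat) (E : {set X * 'I_l}) :
  @PU X l E (enum 'I_l) = (\prod_(j < l) degY E j)%nat.
Proof. by rewrite /PU big_enum. Qed.

Open Scope R_scope.
Lemma sum_le_e n : sum_f_R0 (fun k => / INR (Factorial.fact k)) n <= exp 1.
Proof.
unfold exp; destruct (exist_exp 1) as [e He]; simpl.
unfold exp_in, infinite_sum in He.
apply (growing_ineq (fun n => sum_f_R0 (fun k => / INR (Factorial.fact k) * 1 ^ k) n)) with (n:=n) in He.
- eapply Rle_trans; [|exact He]. right. apply sum_eq. intros; rewrite pow1; ring.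
- intro m; rewrite tech5 pow1 Rmult_1_r. pose proof (INR_fact_lt_0 (S m)).
  assert (0 < / INR (Factorial.fact (S m))) by (apply Rinv_0_lt_compat; lra). lra.
Qed.

Lemma H_eq m : INR (Hf m) = INR (Factorial.fact m) * sum_f_R0 (fun k => / INR (Factorial.fact k)) m.
Proof.
induction m as [|m IH].
- simpl. field.
- change (INR (1 + m.+1 * Hf m) = INR (Factorial.fact (S m)) * sum_f_R0 (fun k => / INR (Factorial.fact k)) (S m)).
  rewrite tech5 plus_INR mult_INR IH fact_simpl mult_INR.
  pose proof (INR_fact_neq_0 m). rewrite (S_INR m). change (INR 1) with 1.
  field. split; auto. pose proof (pos_INR m); lra.
Qed.

Lemma H_le m : INR (Hf m) <= exp 1 * INR (m`!).
Proof.
rewrite H_eq. assert (Hm : INR (m`!) = INR (Factorial.fact m)).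
{ f_equal. elim: m => // m IH. rewrite factS IH. by []. }
rewrite Hm (Rmult_comm (exp 1)). apply Rmult_le_compat_l. apply pos_INR. apply sum_le_e.
Qed.
Close Scope R_scope.

Unset Implicit Arguments.

Theorem lemma3 (X : finType) (l : nat) (D : eqType) (E : {set X * 'I_l})
    (s : seq {ffun X -> D}) :
  uniq s ->
  (forall j : 'I_l, 0 < degY E j) ->
  Hequiv E (EH E s) s /\
  (INR (size (EH E s)) <= exp 1 * INR (phiH E))%R.
Proof.
move=> _ hdeg.
have Iv := @Inv_fold X l D E s _ (Inv_init D E).
split.
  move=> t0; split.
    move=> [tr]; rewrite mem_undup mem_pmap => /mapP [n nin ntr] h.
    exists tr => //.
    apply: (lab_fold (P := mem s) _ _ nin (esym ntr)); last exact/allP.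
    by move=> m tr'; rewrite inE => /eqP ->.
  move=> [tR tRs /accP h].
  have : @Good X l D E t0 (TH E s).
    case/splitPr: tRs => s1 s2.
    rewrite /TH foldl_cat /=; apply: good_fold.
    have [g|p] := @fold_GP X l D E t0 s1 _ (Inv_init D E) (or_intror (ex_intro2 _ _ ([::], None) (mem_head _ _) (conj erefl isT))).
      exact: good_step.
    exact: pend_acc.
  move=> [n nin [tr ntr /accP atr]]; exists tr => //.
  by rewrite mem_undup mem_pmap; apply/mapP; exists n.
case: Iv => u v _.
have hb := @count_bound X l E l (enum 'I_l) (map (@proj X l D) (TH E s)) (enum_uniq _) (size_enum_ord _) hdeg u.
have hs : (size (EH E s) <= Hf l * \prod_(j < l) degY E j)%nat.
  apply: leq_trans (_ : size (TH E s) <= _)%nat.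
    rewrite /EH; apply: leq_trans (size_undup _) _.
    rewrite size_pmap; exact: count_size.
  rewrite -(size_map (@proj X l D)) -PU_enum; apply: hb.
  apply/allP => q /mapP [n nin ->]; exact: (allP v).
apply: Rle_trans; first exact: (le_INR _ _ (leP hs)).
rewrite /phiH !mult_INR -Rmult_assoc.
apply: Rmult_le_compat_r; first exact: pos_INR.
exact: H_le.
Qed.
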